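(* Let $H$ be a group, let $\phi\in\operatorname{Aut}(H)$ and let $K$ be a proper subgroup of $H$ such that $K$ is a proper subgroup of its normalizer $N_H(K)$ and $K$ contains an element of infinite order. Let $G=H\ast_{(K,\phi)}=\langle H, t;\ tkt^{-1}=\phi(k),\ k\in K\rangle$. Then $\mathbb{Z}\times\mathbb{Z}$ embeds into $G$.
   Context: For a group $H$, $\phi\in\operatorname{Aut}(H)$ and a proper subgroup $K\lneq H$, the automorphism-induced HNN-extension $H\ast_{(K,\phi)}$ is the group given by the relative presentation $\langle H, t;\ tkt^{-1}=\phi(k),\ k\in K\rangle$. *)

(* Defs.v *)
From Stdlib Require Import ZArith.

Record group := Group {
  carrier :> Type;
  gmul : carrier -> carrier -> carrier;
  gone : carrier;
  ginv : carrier -> carrier;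
  gmulA : forall x y z, gmul x (gmul y z) = gmul (gmul x y) z;
  gmul1l : forall x, gmul gone x = x;
  gmul1r : forall x, gmul x gone = x;
  gmulVl : forall x, gmul (ginv x) x = gone;
  gmulVr : forall x, gmul x (ginv x) = gone
}.

Arguments gmul {g}.
Arguments gone {g}.
Arguments ginv {g}.

Fixpoint gpow {G : group} (x : G) (n : nat) : G :=
  match n with O => gone | S m => gmul x (gpow x m) end.

Definition is_hom {G L : group} (f : G -> L) : Prop :=
  forall x y, f (gmul x y) = gmul (f x) (f y).

Definition injective {A B : Type} (f : A -> B) : Prop :=
  forall x y, f x = f y -> x = y.

Definition is_aut {G : group} (phi : G -> G) : Prop :=
  is_hom phi /\ injective phi /\ (forall y, exists x, phi x = y).

Definition is_subgroup {G : group} (K : G -> Prop) : Prop :=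
  K gone /\ (forall x y, K x -> K y -> K (gmul x y)) /\ (forall x, K x -> K (ginv x)).

Definition proper_sub {G : group} (K : G -> Prop) : Prop := exists h : G, ~ K h.

Definition normalizer {G : group} (K : G -> Prop) : G -> Prop :=
  fun h => forall k, K k <-> K (gmul h (gmul k (ginv h))).

(* K is properly contained in its normalizer (K <= N_H(K) always holds for a subgroup) *)
Definition proper_in_normalizer {G : group} (K : G -> Prop) : Prop :=
  exists h, normalizer K h /\ ~ K h.

Definition infinite_order {G : group} (x : G) : Prop :=
  forall n : nat, gpow x (S n) <> gone.

(* The automorphism-induced HNN extension H *_(K,phi) = < H, t ; t k t^-1 = phi k, k in K >,
   characterised by the universal property of this relative presentation:
   (G, iota, t) satisfies the relations and, for every group L, every homomorphism
   f : H -> L and every s in L satisfying the relations, there is a unique homomorphism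
   g : G -> L with g o iota = f and g t = s. *)
Definition hnn_relations {H L : group} (K : H -> Prop) (phi : H -> H)
    (f : H -> L) (s : L) : Prop :=
  forall k, K k -> gmul s (gmul (f k) (ginv s)) = f (phi k).

Definition is_HNN_extension (H : group) (K : H -> Prop) (phi : H -> H)
    (G : group) (iota : H -> G) (t : G) : Prop :=
  is_hom iota /\ hnn_relations K phi iota t /\
  forall (L : group) (f : H -> L) (s : L),
    is_hom f -> hnn_relations K phi f s ->
    (exists g : G -> L, is_hom g /\ (forall h, g (iota h) = f h) /\ g t = s) /\
    (forall g1 g2 : G -> L,
        is_hom g1 -> (forall h, g1 (iota h) = f h) -> g1 t = s ->
        is_hom g2 -> (forall h, g2 (iota h) = f h) -> g2 t = s ->
        forall x, g1 x = g2 x).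

Definition ZxZ : group.
Proof.
  refine (@Group (Z * Z)%type
            (fun a b => (fst a + fst b, snd a + snd b)%Z) (0%Z, 0%Z)
            (fun a => (- fst a, - snd a)%Z) _ _ _ _ _).
  - intros [a b] [c d] [e f]; simpl; f_equal; ring.
  - intros [a b]; simpl; reflexivity.
  - intros [a b]; simpl; f_equal; ring.
  - intros [a b]; simpl; f_equal; ring.
  - intros [a b]; simpl; f_equal; ring.
Defined.

(* Main.v *)
Require Import Defs.
From Stdlib Require Import ZArith Lia FunctionalExtensionality ProofIrrelevance ClassicalEpsilon.
From Stdlib Require Import ZArith Lia FunctionalExtensionality ProofIrrelevance ClassicalEpsilon.

Lemma assocr {G : group} (x y z : G) : gmul (gmul x y) z = gmul x (gmul y z).
Proof. symmetry; apply gmulA. Qed.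
Lemma mulKl {G : group} (x r : G) : gmul (ginv x) (gmul x r) = r.
Proof. rewrite gmulA, gmulVl, gmul1l; reflexivity. Qed.
Lemma mulKr {G : group} (x r : G) : gmul x (gmul (ginv x) r) = r.
Proof. rewrite gmulA, gmulVr, gmul1l; reflexivity. Qed.
Lemma inv_uniq {G : group} (a b : G) : gmul a b = gone -> a = ginv b.
Proof. intro E. rewrite <- (gmul1r _ a), <- (gmulVr _ b), gmulA, E, gmul1l. reflexivity. Qed.
Lemma inv_mul {G : group} (x y : G) : ginv (gmul x y) = gmul (ginv y) (ginv x).
Proof. symmetry; apply inv_uniq. rewrite assocr, mulKl, gmulVl. reflexivity. Qed.
Lemma inv_inv {G : group} (x : G) : ginv (ginv x) = x.
Proof. symmetry; apply inv_uniq, gmulVr. Qed.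
Lemma inv_one {G : group} : ginv (@gone G) = gone.
Proof. symmetry; apply inv_uniq, gmul1l. Qed.

Hint Rewrite @assocr @mulKl @mulKr @gmulVl @gmulVr @gmul1l @gmul1r @inv_mul @inv_inv @inv_one : grp.
Ltac gsimpl := autorewrite with grp.

Lemma idem_one {G : group} (x : G) : gmul x x = x -> x = gone.
Proof. intro E. rewrite <- (mulKl x x), E. apply gmulVl. Qed.
Lemma inv_eq1 {G : group} (x : G) : ginv x = gone -> x = gone.
Proof. intro E. rewrite <- (inv_inv x), E. apply inv_one. Qed.

Lemma gpow_comm {G : group} (x : G) m : gmul (gpow x m) x = gmul x (gpow x m).
Proof. induction m; simpl. - gsimpl; reflexivity. - rewrite assocr, IHm; reflexivity. Qed.

Definition zpow {G : group} (x : G) (a : Z) : G :=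
  if (0 <=? a)%Z then gpow x (Z.to_nat a) else ginv (gpow x (Z.to_nat (- a))).

Lemma zpow0 {G : group} (x : G) : zpow x 0 = gone.
Proof. reflexivity. Qed.

Lemma zpow_succ {G : group} (x : G) a : zpow x (a + 1) = gmul (zpow x a) x.
Proof.
  unfold zpow. destruct (Z.leb_spec 0 a).
  - rewrite (proj2 (Z.leb_le 0 (a+1))) by lia.
    replace (Z.to_nat (a+1)) with (S (Z.to_nat a)) by lia. simpl. symmetry; apply gpow_comm.
  - destruct (Z.leb_spec 0 (a+1)).
    + assert (a = (-1)%Z) by lia. subst. simpl. gsimpl. reflexivity.
    + replace (Z.to_nat (-a)) with (S (Z.to_nat (-(a+1)))) by lia. simpl. gsimpl. reflexivity.
Qed.

Lemma zpow_pred {G : group} (x : G) c : zpow x (Z.pred c) = gmul (zpow x c) (ginv x).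
Proof.
  pose proof (zpow_succ x (Z.pred c)) as E.
  replace (Z.pred c + 1)%Z with c in E by lia. rewrite E. gsimpl. reflexivity.
Qed.

Lemma zpow_add {G : group} (x : G) a b : zpow x (a + b) = gmul (zpow x a) (zpow x b).
Proof.
  revert a. induction b using Z.peano_ind; intro a.
  - rewrite Z.add_0_r, zpow0, gmul1r. reflexivity.
  - unfold Z.succ. rewrite Z.add_assoc, !zpow_succ, IHb. gsimpl. reflexivity.
  - replace (a + Z.pred b)%Z with (Z.pred (a + b)) by lia.
    rewrite !zpow_pred, IHb. gsimpl. reflexivity.
Qed.

Lemma zpow_one_inv {G : group} (x : G) a : zpow x a = gone -> gpow x (Z.abs_nat a) = gone.
Proof.
  unfold zpow. destruct (Z.leb_spec 0 a); intro E.
  - replace (Z.abs_nat a) with (Z.to_nat a) by lia. exact E.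
  - replace (Z.abs_nat a) with (Z.to_nat (-a)) by lia. apply inv_eq1. exact E.
Qed.

Lemma gpow_one {G : group} m : gpow (@gone G) m = gone.
Proof. induction m; simpl; [reflexivity|]. rewrite IHm; apply gmul1l. Qed.
Lemma zpow_one {G : group} a : zpow (@gone G) a = gone.
Proof. unfold zpow. destruct (0 <=? a)%Z; rewrite gpow_one; [reflexivity| apply inv_one]. Qed.

Definition comm {G : group} (x y : G) := gmul x y = gmul y x.

Lemma comm_inv {G : group} (x y : G) : comm x y -> comm x (ginv y).
Proof.
  unfold comm; intro E.
  transitivity (gmul (gmul (ginv y) (gmul y x)) (ginv y)).
  - gsimpl. reflexivity.
  - rewrite <- E. gsimpl. reflexivity.
Qed.
Lemma comm_gpow {G : group} (x y : G) m : comm x y -> comm x (gpow y m).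
Proof.
  unfold comm; intro E. induction m; simpl.
  - gsimpl; reflexivity.
  - rewrite gmulA, E, assocr, IHm, gmulA. reflexivity.
Qed.
Lemma comm_zpow {G : group} (x y : G) a : comm x y -> comm x (zpow y a).
Proof.
  intro E. unfold zpow. destruct (0 <=? a)%Z.
  - apply comm_gpow; exact E.
  - apply comm_inv, comm_gpow; exact E.
Qed.
Lemma comm_sym {G : group} (x y : G) : comm x y -> comm y x.
Proof. unfold comm; intros; symmetry; assumption. Qed.

Section Hom.
End Hom.

Lemma hom_one {G L : group} (f : G -> L) : is_hom f -> f gone = gone.
Proof. intro h. apply idem_one. rewrite <- h, gmul1l. reflexivity. Qed.
Lemma hom_inv {G L : group} (f : G -> L) : is_hom f -> forall x, f (ginv x) = ginv (f x).
Proof. intros h x. apply inv_uniq. rewrite <- h, gmulVl. apply hom_one, h. Qed.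
Lemma hom_gpow {G L : group} (f : G -> L) : is_hom f -> forall x m, f (gpow x m) = gpow (f x) m.
Proof. intros h x m. induction m; simpl. - apply hom_one, h. - rewrite h, IHm. reflexivity. Qed.
Lemma hom_zpow {G L : group} (f : G -> L) : is_hom f -> forall x a, f (zpow x a) = zpow (f x) a.
Proof.
  intros h x a. unfold zpow. destruct (0 <=? a)%Z.
  - apply hom_gpow, h.
  - rewrite hom_inv, hom_gpow by exact h. reflexivity.
Qed.

Record perm (X : Type) := Perm { pf : X -> X; pg : X -> X;
  pfg : forall x, pf (pg x) = x; pgf : forall x, pg (pf x) = x }.
Arguments Perm {X}. Arguments pf {X}. Arguments pg {X}. Arguments pfg {X}. Arguments pgf {X}.

Lemma perm_ext {X} (p q : perm X) : (forall x, pf p x = pf q x) -> p = q.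
Proof.
  destruct p as [f1 g1 h1 k1], q as [f2 g2 h2 k2]; simpl; intro E.
  assert (f1 = f2) by (apply functional_extensionality; exact E). subst f2.
  assert (g1 = g2).
  { apply functional_extensionality; intro x. rewrite <- (h2 x) at 1. apply k1. }
  subst g2. f_equal; apply proof_irrelevance.
Qed.

Definition pmul {X} (p q : perm X) : perm X.
Proof.
  refine (Perm (fun x => pf p (pf q x)) (fun x => pg q (pg p x)) _ _); intro x.
  - rewrite !pfg. reflexivity.
  - rewrite !pgf. reflexivity.
Defined.
Definition pid {X} : perm X := Perm (fun x => x) (fun x => x) (fun x => eq_refl) (fun x => eq_refl).
Definition pinvp {X} (p : perm X) : perm X := Perm (pg p) (pf p) (pgf p) (pfg p).

Definition Sym (X : Type) : group.
Proof.
  refine (@Group (perm X) pmul pid pinvp _ _ _ _ _); intros;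
    apply perm_ext; intros; simpl; rewrite ?pfg, ?pgf; reflexivity.
Defined.

Definition lmul {H : group} (h : H) : Sym H :=
  Perm (fun y => gmul h y) (fun y => gmul (ginv h) y) (fun y => mulKr h y) (fun y => mulKl h y).

Lemma lmul_hom {H : group} : is_hom (@lmul H).
Proof. intros x y. apply perm_ext; intro z; simpl. apply assocr. Qed.

Theorem theoremC (H : group) (phi : H -> H) (K : H -> Prop)
  (Hphi : is_aut phi) (HK : is_subgroup K) (Hprop : proper_sub K)
  (HN : proper_in_normalizer K)
  (Hinf : exists k, K k /\ infinite_order k)
  (G : group) (iota : H -> G) (t : G)
  (HG : is_HNN_extension H K phi G iota t) :
  exists f : ZxZ -> G, is_hom f /\ injective f.
Proof.
  destruct Hinf as [k0 [Hk0 Hk0inf]].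
  destruct HN as [n [Hn Hnk]].
  destruct Hphi as [phihom [phiinj phisurj]].
  destruct HK as [K1 [Kmul Kinv]].
  destruct HG as [iotahom [trel Huniv]].
  set (pinv := fun y => proj1_sig (constructive_indefinite_description _ (phisurj y))).
  assert (Hpinv : forall y, phi (pinv y) = y).
  { intro y. exact (proj2_sig (constructive_indefinite_description _ (phisurj y))). }
  assert (Hpinv2 : forall x, pinv (phi x) = x).
  { intro x. apply phiinj. apply Hpinv. }
  clearbody pinv.
  assert (rel1 : forall k r, K k -> gmul t (gmul (iota k) r) = gmul (iota (phi k)) (gmul t r)).
  { intros k r Hk. rewrite <- (trel k Hk). gsimpl. reflexivity. }
  assert (rel2 : forall k r, K k -> gmul (ginv t) (gmul (iota (phi k)) r) = gmul (iota k) (gmul (ginv t) r)).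
  { intros k r Hk. rewrite <- (trel k Hk). gsimpl. reflexivity. }
  assert (iotaT : forall a b r, gmul (iota a) (gmul (iota b) r) = gmul (iota (gmul a b)) r).
  { intros. rewrite iotahom. gsimpl. reflexivity. }
  set (c := gmul (iota (ginv n)) (gmul (ginv t) (gmul (iota (phi n)) t))).
  assert (Hc : comm c (iota k0)).
  { unfold comm, c. gsimpl. rewrite <- (gmul1r _ (iota k0)) at 1. rewrite (rel1 k0) by exact Hk0. rewrite gmul1r.
    rewrite (iotaT (phi n)).
    set (k' := gmul n (gmul k0 (ginv n))).
    assert (Hk' : K k') by exact (proj1 (Hn k0) Hk0).
    replace (gmul (phi n) (phi k0)) with (gmul (phi k') (phi n)).
    2:{ rewrite <- !phihom. f_equal. unfold k'. gsimpl. reflexivity. }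
    rewrite <- (iotaT (phi k')). rewrite (rel2 k') by exact Hk'.
    rewrite iotaT. replace (gmul (ginv n) k') with (gmul k0 (ginv n)).
    2:{ unfold k'. gsimpl. reflexivity. }
    rewrite <- iotaT. reflexivity. }
  set (sA := (Perm phi pinv Hpinv Hpinv2 : Sym H)).
  assert (relA : hnn_relations K phi lmul sA).
  { intros k Hk. apply perm_ext; intro y; simpl. rewrite phihom, Hpinv. reflexivity. }
  destruct (proj1 (Huniv (Sym H) lmul sA lmul_hom relA)) as [gA [gAhom [gAi gAt]]].
  set (psi := fun y => if excluded_middle_informative (K y) then gmul y k0 else y).
  set (psiinv := fun y => if excluded_middle_informative (K y) then gmul y (ginv k0) else y).
  assert (psi_in : forall y, K y -> psi y = gmul y k0).
  { intros y Hy; unfold psi; destruct (excluded_middle_informative (K y)); tauto. }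
  assert (psi_out : forall y, ~ K y -> psi y = y).
  { intros y Hy; unfold psi; destruct (excluded_middle_informative (K y)); tauto. }
  assert (psiinv_in : forall y, K y -> psiinv y = gmul y (ginv k0)).
  { intros y Hy; unfold psiinv; destruct (excluded_middle_informative (K y)); tauto. }
  assert (psiinv_out : forall y, ~ K y -> psiinv y = y).
  { intros y Hy; unfold psiinv; destruct (excluded_middle_informative (K y)); tauto. }
  clearbody psi psiinv.
  assert (Kl : forall k y, K k -> K (gmul k y) -> K y).
  { intros k y Hk Hky. replace y with (gmul (ginv k) (gmul k y)) by (gsimpl; reflexivity).
    apply Kmul; auto. }
  assert (Kr : forall k y, K k -> K (gmul y k) -> K y).
  { intros k y Hk Hky. replace y with (gmul (gmul y k) (ginv k)) by (gsimpl; reflexivity).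
    apply Kmul; auto. }
  assert (psi1 : forall y, psi (psiinv y) = y).
  { intro y. destruct (classic (K y)) as [Hy|Hy].
    - rewrite psiinv_in, psi_in by auto. gsimpl. reflexivity.
    - rewrite psiinv_out, psi_out by auto. reflexivity. }
  assert (psi2 : forall y, psiinv (psi y) = y).
  { intro y. destruct (classic (K y)) as [Hy|Hy].
    - rewrite psi_in, psiinv_in by auto. gsimpl. reflexivity.
    - rewrite psi_out, psiinv_out by auto. reflexivity. }
  assert (sB1 : forall y, phi (psi (psiinv (pinv y))) = y).
  { intro y. rewrite psi1. apply Hpinv. }
  assert (sB2 : forall y, psiinv (pinv (phi (psi y))) = y).
  { intro y. rewrite Hpinv2. apply psi2. }
  set (sB := (Perm (fun y => phi (psi y)) (fun y => psiinv (pinv y)) sB1 sB2 : Sym H)).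
  assert (relB : hnn_relations K phi lmul sB).
  { intros k Hk. apply perm_ext; intro y; simpl.
    assert (E : psi (gmul k (psiinv (pinv y))) = gmul k (pinv y)).
    { destruct (classic (K (pinv y))) as [Hy|Hy].
      - rewrite psiinv_in by auto. rewrite psi_in. gsimpl. reflexivity.
        apply Kmul; auto.
      - rewrite psiinv_out by auto. rewrite psi_out. reflexivity.
        intro C. apply Hy. exact (Kl k _ Hk C). }
    rewrite E, phihom, Hpinv. reflexivity. }
  destruct (proj1 (Huniv (Sym H) lmul sB lmul_hom relB)) as [gB [gBhom [gBi gBt]]].
  assert (gAc : gA c = gone).
  { unfold c. rewrite !gAhom, (hom_inv gA gAhom), !gAi, gAt.
    apply perm_ext; intro y; simpl. rewrite <- phihom, Hpinv2. gsimpl. reflexivity. }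
  assert (gBc : forall y, K y -> pf (gB c) y = gmul y k0).
  { intros y Hy. unfold c. rewrite !gBhom, (hom_inv gB gBhom), !gBi, gBt. simpl.
    rewrite (psi_in y Hy), <- phihom, Hpinv2, psiinv_out. gsimpl. reflexivity.
    intro C. apply Hnk. apply (Kr (gmul y k0)). apply Kmul; auto. gsimpl. exact C. }
  assert (Kpow : forall m, K (gpow k0 m)).
  { induction m; simpl; auto. }
  assert (gBpow : forall m y, K y -> pf (gpow (gB c) m) y = gmul y (gpow k0 m)).
  { induction m; intros y Hy; simpl. - gsimpl. reflexivity.
    - rewrite IHm by auto. rewrite gBc by auto. rewrite assocr, gpow_comm. reflexivity. }
  assert (absz : forall a, gpow k0 (Z.abs_nat a) = gone -> a = 0%Z).
  { intros a E. destruct (Z.abs_nat a) eqn:Ea. - lia. - exfalso; exact (Hk0inf n0 E). }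
  assert (KEY : forall a b, gmul (zpow c a) (zpow (iota k0) b) = gone -> a = 0%Z /\ b = 0%Z).
  { intros a b E.
    assert (b = 0%Z) as ->.
    { pose proof (f_equal gA E) as EA.
      rewrite gAhom, !(hom_zpow gA gAhom), gAc, gAi, (hom_one gA gAhom), zpow_one, gmul1l in EA.
      rewrite <- (hom_zpow lmul lmul_hom) in EA.
      pose proof (f_equal (fun p : Sym H => pf p gone) EA) as EA'. simpl in EA'.
      rewrite gmul1r in EA'. apply absz. apply zpow_one_inv. exact EA'. }
    split; [|reflexivity].
    rewrite zpow0, gmul1r in E.
    pose proof (f_equal gB E) as EB.
    rewrite (hom_zpow gB gBhom), (hom_one gB gBhom) in EB.
    apply zpow_one_inv in EB.
    pose proof (f_equal (fun p : Sym H => pf p gone) EB) as EB'. simpl in EB'.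
    rewrite gBpow in EB' by auto. rewrite gmul1l in EB'. apply absz; exact EB'. }
  assert (Hcc : forall a b, comm (zpow c a) (zpow (iota k0) b)).
  { intros a b. apply comm_sym, comm_zpow, comm_sym, comm_zpow, Hc. }
  set (f := fun p : Z * Z => gmul (zpow c (fst p)) (zpow (iota k0) (snd p))).
  assert (fhom : is_hom (L:=G) (G:=ZxZ) f).
  { intros [a b] [a' b']. simpl. unfold f; simpl. rewrite !zpow_add.
    gsimpl. f_equal. rewrite gmulA, (Hcc a' b), assocr. reflexivity. }
  exists f. split; [exact fhom|].
  intros [a b] [a' b'] E.
  assert (E2 : f ((a - a')%Z, (b - b')%Z) = gone).
  { replace ((a - a')%Z, (b - b')%Z) with (gmul (g:=ZxZ) (a, b) (- a', - b')%Z)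
      by (simpl; f_equal; lia).
    rewrite fhom, E, <- fhom.
    replace (gmul (g:=ZxZ) (a', b') (- a', - b')%Z) with (0%Z, 0%Z) by (simpl; f_equal; lia).
    unfold f; simpl. rewrite zpow0, gmul1l. reflexivity. }
  destruct (KEY _ _ E2) as [Ha Hb]; simpl in Ha, Hb. f_equal; lia.
Qed.
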